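(* Let $d\ge3$, let $C$ be a set of lines on ${\rm F}_d$ and put $C^s=C\cap\mathcal{L}^s$ for $s=0,1,2$. Then: (a) $C^0$ consists of pairwise disjoint lines if and only if $C^0=\{L^0_{a_1,b_1},\dots,L^0_{a_m,b_m}\}$ with $\#C^0=m$, $0\le a_1<\dots<a_m\le d-1$, and there is a permutation $\sigma$ of $R_d$ with $\sigma(a_i)=b_i$ for all $i$; (b) $C^1$ consists of pairwise disjoint lines if and only if $C^1=\{L^1_{a_1,b_1},\dots,L^1_{a_m,b_m}\}$ with $\#C^1=m$, $0\le b_1<\dots<b_m\le d-1$, and $\varphi_{d,+}$ restricted to $\{(a_i,b_i)\}_{i=1}^m$ is injective; (c) $C^2$ consists of pairwise disjoint lines if and only if $C^2=\{L^2_{a_1,b_1},\dots,L^2_{a_m,b_m}\}$ with $\#C^2=m$, $0\le b_1<\dots<b_m\le d-1$, and $\varphi_{d,+}$ restricted to $\{(a_i,b_i)\}_{i=1}^m$ is injective.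
   Context: ${\rm F}_d\subset\mathbb{P}^3(\mathbb{C})$ is the surface $x^d-y^d-z^d+w^d=0$; $R_d=\{0,\dots,d-1\}$ and $r_d$ denotes remainder mod $d$. Fix a primitive $d$-th root of unity $\eta$ and $v\in\mathbb{C}$ with $v^d=-1$. For $k,i\in R_d$ define $L^0_{k,i}:\{y=\eta^i x,\ w=\eta^k z\}$, $L^1_{k,i}:\{x=\eta^{k+i}z,\ y=\eta^i w\}$, $L^2_{k,i}:\{x=v\eta^i w,\ y=v\eta^{k+i}z\}$, and $\mathcal{L}^s=\{L^s_{k,i}\}_{k,i\in R_d}$; these are all the lines on ${\rm F}_d$. Define $\varphi_{d,+}:R_d\times R_d\to R_d$ by $\varphi_{d,+}(k,i)=r_d(i+k)$. *)

(* Defs.v *)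
From HB Require Import structures.
From mathcomp Require Import all_boot all_order all_algebra.
From mathcomp Require Import fingroup perm complex Rstruct.
Set Implicit Arguments. Unset Strict Implicit. Unset Printing Implicit Defensive.
Import Order.TTheory GRing.Theory Num.Theory.
Local Open Scope ring_scope.

Definition CC : Type := complex Rdefinitions.R.

(* Homogeneous coordinates (x, y, z, w) of a point of P^3(C):
   a nonzero vector of C^4 (the equations below are homogeneous,
   so working with representatives is harmless). *)
Definition nonzero_pt (x y z w : CC) : Prop :=
  ~ (x = 0 /\ y = 0 /\ z = 0 /\ w = 0).

Definition on_Fd (d : nat) (x y z w : CC) : Prop :=
  x ^+ d - y ^+ d - z ^+ d + w ^+ d = 0.

(* Lines L^s_{k,i}, s = 0,1,2, as predicates on homogeneous coordinates,
   for a fixed primitive d-th root of unity eta and v with v^d = -1.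
   L^0_{k,i}: y = eta^i x,  w = eta^k z
   L^1_{k,i}: x = eta^(k+i) z, y = eta^i w
   L^2_{k,i}: x = v eta^i w, y = v eta^(k+i) z *)
Definition on_line (eta v : CC) (s : 'I_3) (k i : nat) (x y z w : CC) : Prop :=
  match val s with
  | 0 => y = eta ^+ i * x /\ w = eta ^+ k * z
  | 1 => x = eta ^+ (k + i) * z /\ y = eta ^+ i * w
  | _ => x = v * eta ^+ i * w /\ y = v * eta ^+ (k + i) * z
  end.

Definition lines_disjoint (eta v : CC) (s : 'I_3) (k1 i1 k2 i2 : nat) : Prop :=
  forall x y z w : CC, nonzero_pt x y z w ->
    ~ (on_line eta v s k1 i1 x y z w /\ on_line eta v s k2 i2 x y z w).

(* A set of lines on F_d is a set of labels (s, (k, i)) with s in {0,1,2},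
   k, i in R_d; the label (s,(k,i)) stands for the line L^s_{k,i}. *)
Definition line_label (d : nat) : finType := ('I_3 * ('I_d * 'I_d))%type.

Definition Cpart (d : nat) (C : {set line_label d}) (s : 'I_3) : {set 'I_d * 'I_d} :=
  [set ki | (s, ki) \in C].

Definition pairwise_disjoint (d : nat) (eta v : CC) (s : 'I_3)
    (Cs : {set 'I_d * 'I_d}) : Prop :=
  forall p q, p \in Cs -> q \in Cs -> p != q ->
    lines_disjoint eta v s p.1 p.2 q.1 q.2.

Definition phi_plus (d : nat) (p : 'I_d * 'I_d) : nat := (p.2 + p.1) %% d.

Definition fam0 : 'I_3 := @Ordinal 3 0 isT.
Definition fam1 : 'I_3 := @Ordinal 3 1 isT.
Definition fam2 : 'I_3 := @Ordinal 3 2 isT.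

(* Main.v *)
Require Import Defs.
From HB Require Import structures.
From mathcomp Require Import all_boot all_order all_algebra.
From mathcomp Require Import fingroup perm complex Rstruct.
Import Order.TTheory GRing.Theory Num.Theory.
Local Open Scope ring_scope.

Lemma cancel_pt (e1 e2 x y : CC) : e1 != e2 -> y = e1 * x -> y = e2 * x -> x = 0 /\ y = 0.
Proof.
move=> ne h1 h2.
have: (e1 - e2) * x = 0 by rewrite mulrBl -h1 -h2 subrr.
move/eqP; rewrite mulf_eq0 subr_eq0 (negbTE ne) /= => /eqP x0.
by split; rewrite // h1 x0 mulr0.
Qed.

Lemma one_neq0 : (1 : CC) <> 0.
Proof. by move/eqP; rewrite oner_eq0. Qed.

Lemma disj0 d (eta v : CC) (p q : 'I_d * 'I_d) : d.-primitive_root eta ->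
  lines_disjoint eta v fam0 p.1 p.2 q.1 q.2 <-> (p.1 != q.1) && (p.2 != q.2).
Proof.
move=> pr; case: p q => [k1 i1] [k2 i2] /=.
have E (a b : 'I_d) : (eta ^+ a == eta ^+ b) = (a == b).
  by rewrite (eq_prim_root_expr pr) !modn_small.
split.
- move=> H; apply/andP; split; apply/negP => /eqP e.
  + apply: (H 0 0 1 (eta ^+ k1)); first by move=> [_ [_ [/one_neq0]]].
    by rewrite /on_line /= -e !mulr0 mulr1.
  + apply: (H 1 (eta ^+ i1) 0 0); first by move=> [/one_neq0].
    by rewrite /on_line /= -e !mulr0 mulr1.
- move=> /andP [nk ni] x y z w nz [[h1 h2] [h3 h4]]; apply: nz.
have [x0 y0] : x = 0 /\ y = 0 by apply: (@cancel_pt _ _ _ _ _ h1 h3); rewrite ?E ?E'.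
  have [z0 w0] : z = 0 /\ w = 0 by apply: (@cancel_pt _ _ _ _ _ h2 h4); rewrite ?E ?E'.
  by rewrite x0 y0 z0 w0.
Qed.

Lemma disj1 d (eta v : CC) (p q : 'I_d * 'I_d) : d.-primitive_root eta ->
  lines_disjoint eta v fam1 p.1 p.2 q.1 q.2 <->
  (p.2 != q.2) && (phi_plus p != phi_plus q).
Proof.
move=> pr; case: p q => [k1 i1] [k2 i2]; rewrite /phi_plus /=.
have E (a b : 'I_d) : (eta ^+ a == eta ^+ b) = (a == b).
  by rewrite (eq_prim_root_expr pr) !modn_small.
have E' : (eta ^+ (k1 + i1)%N == eta ^+ (k2 + i2)%N) = ((i1 + k1) %% d == (i2 + k2) %% d)%N.
  by rewrite (eq_prim_root_expr pr) addnC (addnC k2).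
split.
- move=> H; apply/andP; split; apply/negP => /eqP e.
  + apply: (H 0 (eta ^+ i1) 0 1); first by move=> [_ [_ [_ /one_neq0]]].
    by rewrite /on_line /= -e !mulr0 mulr1.
  + apply: (H (eta ^+ (k1 + i1)%N) 0 1 0); first by move=> [_ [_ [/one_neq0]]].
    have /eqP e' : (eta ^+ (k1 + i1)%N == eta ^+ (k2 + i2)%N) by rewrite E' e.
    by rewrite /on_line /= -e' !mulr0 mulr1.
- move=> /andP [ni nk] x y z w nz [[h1 h2] [h3 h4]]; apply: nz.
  have [z0 x0] : z = 0 /\ x = 0 by apply: (@cancel_pt _ _ _ _ _ h1 h3); rewrite ?E ?E'.
  have [w0 y0] : w = 0 /\ y = 0 by apply: (@cancel_pt _ _ _ _ _ h2 h4); rewrite ?E ?E'.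
  by rewrite x0 y0 z0 w0.
Qed.

Lemma disj2 d (eta v : CC) (p q : 'I_d * 'I_d) : d.-primitive_root eta -> v != 0 ->
  lines_disjoint eta v fam2 p.1 p.2 q.1 q.2 <->
  (p.2 != q.2) && (phi_plus p != phi_plus q).
Proof.
move=> pr vn; case: p q => [k1 i1] [k2 i2]; rewrite /phi_plus /=.
have E (a b : 'I_d) : (v * eta ^+ a == v * eta ^+ b) = (a == b).
  by rewrite (inj_eq (mulfI vn)) (eq_prim_root_expr pr) !modn_small.
have E' : (v * eta ^+ (k1 + i1)%N == v * eta ^+ (k2 + i2)%N) = ((i1 + k1) %% d == (i2 + k2) %% d)%N.
  by rewrite (inj_eq (mulfI vn)) (eq_prim_root_expr pr) addnC (addnC k2).
split.
- move=> H; apply/andP; split; apply/negP => /eqP e.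
  + apply: (H (v * eta ^+ i1) 0 0 1); first by move=> [_ [_ [_ /one_neq0]]].
    by rewrite /on_line /= -e !mulr0 mulr1.
  + apply: (H 0 (v * eta ^+ (k1 + i1)%N) 1 0); first by move=> [_ [_ [/one_neq0]]].
    have /eqP e' : (v * eta ^+ (k1 + i1)%N == v * eta ^+ (k2 + i2)%N) by rewrite E' e.
    by rewrite /on_line /= -e' !mulr0 mulr1.
- move=> /andP [ni nk] x y z w nz [[h1 h2] [h3 h4]]; apply: nz.
  have [w0 x0] : w = 0 /\ x = 0 by apply: (@cancel_pt _ _ _ _ _ h1 h3); rewrite ?E ?E'.
  have [z0 y0] : z = 0 /\ y = 0 by apply: (@cancel_pt _ _ _ _ _ h2 h4); rewrite ?E ?E'.
  by rewrite x0 y0 z0 w0.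
Qed.
Lemma pairE (T U : Type) (p : T * U) : (p.1, p.2) = p.
Proof. by case: p. Qed.

Lemma enum_sorted d (x0 : 'I_d * 'I_d) (S : {set 'I_d * 'I_d})
  (f : 'I_d * 'I_d -> nat) : {in S &, injective f} ->
  exists (a b : 'I_#|S| -> 'I_d), S = [set (a j, b j) | j in 'I_#|S|] /\
   (forall j1 j2 : 'I_#|S|, (j1 < j2)%N -> (f (a j1, b j1) < f (a j2, b j2))%N).
Proof.
move=> finj.
pose s := sort (fun p q => (f p <= f q)%N) (enum S).
have sz : size s = #|S| by rewrite size_sort cardE.
have memS p : (p \in s) = (p \in S) by rewrite mem_sort mem_enum.
exists (fun j => (nth x0 s j).1), (fun j => (nth x0 s j).2); split.
  apply/setP => p; apply/idP/imsetP.
    rewrite -memS => /(nthP x0) [j jlt <-].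
    have jS : (j < #|S|)%N by rewrite -sz.
    by exists (Ordinal jS) => //=; rewrite pairE.
  case=> j _ ->; rewrite pairE -memS; apply: mem_nth; by rewrite sz.
have so : sorted ltn (map f s).
  rewrite ltn_sorted_uniq_leq; apply/andP; split.
    rewrite map_inj_in_uniq ?sort_uniq ?enum_uniq //.
    by move=> p q; rewrite !memS; apply: finj.
  rewrite sorted_map; apply: sort_sorted => p q; exact: leq_total.
move=> j1 j2 lt; rewrite !pairE.
have := sorted_ltn_nth ltn_trans (f x0) so; rewrite size_map sz => /(_ j1 j2).
by rewrite !inE !ltn_ord !(nth_map x0) ?sz ?ltn_ord //; apply.
Qed.
Lemma perm_ext d (S : {set 'I_d * 'I_d}) :
  {in S &, injective fst} -> {in S &, injective snd} ->
  exists sigma : {perm 'I_d}, forall p, p \in S -> sigma p.1 = p.2.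
Proof.
move=> i1 i2.
pose A := fst @: S. pose B := snd @: S.
pose partner x := if [pick p in S | p.1 == x] is Some p then p.2 else x.
have partnerE p : p \in S -> partner p.1 = p.2.
  rewrite /partner; case: pickP => [q /andP [qS /eqP e] pS|].
    by rewrite (i1 q p qS pS e).
  by move=> /(_ p) H pS; rewrite pS eqxx in H.
pose lA := enum (~: A); pose lB := enum (~: B).
have cardAB : #|A| = #|B| by rewrite !card_in_imset.
have cC : #|~: A| = #|~: B|.
  by apply/eqP; rewrite -(eqn_add2l #|A|) cardsC {1}cardAB cardsC.
have szAB : size lA = size lB by rewrite /lA /lB -!cardE cC.
pose h x := if x \in A then partner x else nth x lB (index x lA).
have inlA y : y \notin A -> y \in lA by move=> yA; rewrite mem_enum in_setC.
have hB y : y \notin A -> nth y lB (index y lA) \notin B.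
  move=> yA; have: nth y lB (index y lA) \in lB.
    by apply: mem_nth; rewrite -szAB index_mem inlA.
  by rewrite mem_enum in_setC.
have hA x : x \in A -> partner x \in B.
  by case/imsetP=> p pS ->; rewrite partnerE //; apply: imset_f.
have hinj : injective h.
  move=> x y; rewrite /h.
  case xA: (x \in A); case yA: (y \in A).
  - move: xA yA => /imsetP [p pS ->] /imsetP [q qS ->].
    by rewrite !partnerE // => e; rewrite (i2 p q pS qS e).
  - by move=> e; have := hB y (negbT yA); rewrite -e hA.
  - by move=> e; have := hB x (negbT xA); rewrite e hA.
  - move=> e.
    have xl := inlA x (negbT xA); have yl := inlA y (negbT yA).
    move: e; rewrite (set_nth_default y) ?(@set_nth_default _ _ y y) -?szAB ?index_mem //.
    move=> /eqP; rewrite nth_uniq -?szAB ?index_mem ?enum_uniq // => /eqP e.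
    by rewrite -(nth_index x xl) e nth_index.
exists (perm hinj) => p pS; rewrite permE /h.
by rewrite (imset_f fst pS) partnerE.
Qed.

Lemma mono_neq m (f : 'I_m -> nat) :
  (forall j1 j2 : 'I_m, (j1 < j2)%N -> (f j1 < f j2)%N) ->
  forall j1 j2, j1 != j2 -> f j1 != f j2.
Proof.
move=> mo j1 j2 ne; case: (ltngtP j1 j2) => h.
- by rewrite ltn_eqF ?mo.
- by rewrite gtn_eqF ?mo.
- by move: ne; rewrite (val_inj h) eqxx.
Qed.

Lemma partA d (x0 : 'I_d * 'I_d) (P : {set 'I_d * 'I_d})
  (D : 'I_d * 'I_d -> 'I_d * 'I_d -> Prop) :
  (forall p q, D p q <-> (p.1 != q.1) && (p.2 != q.2)) ->
  ((forall p q, p \in P -> q \in P -> p != q -> D p q) <->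
   exists (m : nat) (a b : 'I_m -> 'I_d),
     [/\ P = [set (a j, b j) | j in 'I_m],
         #|P| = m,
         (forall j1 j2 : 'I_m, (j1 < j2)%N -> (a j1 < a j2)%N) &
         exists sigma : {perm 'I_d}, forall j : 'I_m, sigma (a j) = b j]).
Proof.
move=> HD; split.
- move=> H.
  have i1' : {in P &, injective (fun p : 'I_d * 'I_d => nat_of_ord p.1)}.
    move=> p q pS qS /val_inj e; apply/eqP/negPn/negP => ne.
    by have := (HD p q).1 (H p q pS qS ne); rewrite e eqxx.
  have i1 : {in P &, injective fst}.
    by move=> p q pS qS e; apply: i1'; rewrite // e.
  have i2 : {in P &, injective snd}.
    move=> p q pS qS e; apply/eqP/negPn/negP => ne.
    by have := (HD p q).1 (H p q pS qS ne); rewrite e eqxx andbF.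
  have [a [b [eS mo]]] := @enum_sorted _ x0 _ _ i1'.
  have [sigma hs] := @perm_ext _ _ i1 i2.
  exists #|P|, a, b; split => //.
  have memS p : (p \in P) = (p \in [set (a j, b j) | j in 'I_#|P|]) by rewrite -eS.
  exists sigma => j; apply: (hs (a j, b j)); rewrite memS; exact: imset_f.
- case=> m [a [b [eS _ mo [sigma hs]]]] p q.
  rewrite eS => /imsetP [j1 _ ->] /imsetP [j2 _ ->] ne.
  have nj : j1 != j2 by apply: contraNneq ne => ->.
  apply/HD/andP; split => /=.
    exact: (@mono_neq _ (fun j => nat_of_ord (a j)) mo _ _ nj).
  by rewrite -!hs (inj_eq perm_inj) -val_eqE (@mono_neq _ (fun j => nat_of_ord (a j)) mo _ _ nj).
Qed.

Lemma partBC d (x0 : 'I_d * 'I_d) (P : {set 'I_d * 'I_d})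
  (D : 'I_d * 'I_d -> 'I_d * 'I_d -> Prop) :
  (forall p q, D p q <-> (p.2 != q.2) && (phi_plus p != phi_plus q)) ->
  ((forall p q, p \in P -> q \in P -> p != q -> D p q) <->
   exists (m : nat) (a b : 'I_m -> 'I_d),
     [/\ P = [set (a j, b j) | j in 'I_m],
         #|P| = m,
         (forall j1 j2 : 'I_m, (j1 < j2)%N -> (b j1 < b j2)%N) &
         {in ([set (a j, b j) | j in 'I_m] : {set 'I_d * 'I_d}) &, injective (@phi_plus d)}]).
Proof.
move=> HD; split.
- move=> H.
  have i2' : {in P &, injective (fun p : 'I_d * 'I_d => nat_of_ord p.2)}.
    move=> p q pS qS /val_inj e; apply/eqP/negPn/negP => ne.
    by have := (HD p q).1 (H p q pS qS ne); rewrite e eqxx.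
  have iphi : {in P &, injective (@phi_plus d)}.
    move=> p q pS qS e; apply/eqP/negPn/negP => ne.
    by have := (HD p q).1 (H p q pS qS ne); rewrite e eqxx andbF.
  have [a [b [eS mo]]] := @enum_sorted _ x0 _ _ i2'.
  exists #|P|, a, b; split => //.
  by move=> p q; rewrite -eS; apply: iphi.
- case=> m [a [b [eS _ mo iphi]]] p q pS qS ne.
  apply/HD/andP; split.
    move: (pS) (qS) ne; rewrite eS => /imsetP [j1 _ ->] /imsetP [j2 _ ->] ne /=.
    have nj : j1 != j2 by apply: contraNneq ne => ->.
    exact: (@mono_neq _ (fun j => nat_of_ord (b j)) mo _ _ nj).
  by apply: contra ne => /eqP e; apply/eqP; apply: iphi; rewrite // -eS.
Qed.

Theorem corollary2p4 (d : nat) (eta v : CC) (C : {set line_label d}) :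
  (3 <= d)%N ->
  d.-primitive_root eta ->
  v ^+ d = -1 ->
  (* (a) *)
  (pairwise_disjoint eta v fam0 (Cpart C fam0) <->
   exists (m : nat) (a b : 'I_m -> 'I_d),
     [/\ Cpart C fam0 = [set (a j, b j) | j in 'I_m],
         #|Cpart C fam0| = m,
         (forall j1 j2 : 'I_m, (j1 < j2)%N -> (a j1 < a j2)%N) &
         exists sigma : {perm 'I_d}, forall j : 'I_m, sigma (a j) = b j])
  /\
  (* (b) *)
  (pairwise_disjoint eta v fam1 (Cpart C fam1) <->
   exists (m : nat) (a b : 'I_m -> 'I_d),
     [/\ Cpart C fam1 = [set (a j, b j) | j in 'I_m],
         #|Cpart C fam1| = m,
         (forall j1 j2 : 'I_m, (j1 < j2)%N -> (b j1 < b j2)%N) &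
         {in ([set (a j, b j) | j in 'I_m] : {set 'I_d * 'I_d}) &, injective (@phi_plus d)}])
  /\
  (* (c) *)
  (pairwise_disjoint eta v fam2 (Cpart C fam2) <->
   exists (m : nat) (a b : 'I_m -> 'I_d),
     [/\ Cpart C fam2 = [set (a j, b j) | j in 'I_m],
         #|Cpart C fam2| = m,
         (forall j1 j2 : 'I_m, (j1 < j2)%N -> (b j1 < b j2)%N) &
         {in ([set (a j, b j) | j in 'I_m] : {set 'I_d * 'I_d}) &, injective (@phi_plus d)}]).
Proof.
move=> d3 pr hv.
have dpos : (0 < d)%N by apply: leq_trans d3.
have vn : v != 0.
  apply/eqP => v0; move: hv; rewrite v0 -(prednK dpos) exprS mul0r => /eqP.
  by rewrite eq_sym oppr_eq0 oner_eq0.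
pose x0 : 'I_d * 'I_d := (Ordinal dpos, Ordinal dpos).
split; last split.
- apply: (@partA _ x0) => p q; exact: disj0.
- apply: (@partBC _ x0) => p q; exact: disj1.
- apply: (@partBC _ x0) => p q; exact: disj2.
Qed.
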